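(* Let $d\ge1$, $\mu\in\mathbb{R}^d$, $\Sigma\in\mathbb{R}^{d\times d}$ symmetric positive definite, $\alpha>0$, $\delta\in(0,1)$, and $Z\sim\mathcal{N}(\mu,\Sigma)$. Consider the feasible set $$\{e\in\mathbb{R}^d:\ \mathbb{P}[Z^\top e\ge\alpha]\ge1-\delta\}$$ of the agent's problem $\min_e \mathrm{Cost}(e)$ subject to this constraint. The problem is feasible (the set is nonempty) when $\delta>\Phi\big(-\|\Sigma^{-1/2}\mu\|_2\big)$, and infeasible otherwise, where $\Phi$ is the standard normal CDF.
   Context: $Z$ plays the role of the agent's Gaussian belief about the vector $\mathbb{C}h$ of total feature contributions; $\alpha>0$ is the amount by which the agent's score falls short of the threshold (standing assumption in the paper), and $1-\delta$ is the required probability of passing the classifier. *)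

(* Defs.v *)
From HB Require Import structures.
From mathcomp Require Import all_boot all_order all_algebra.
From mathcomp Require Import all_classical all_reals all_analysis.
Set Implicit Arguments.
Unset Strict Implicit.
Unset Printing Implicit Defensive.
Import Order.TTheory GRing.Theory Num.Theory.
Local Open Scope classical_set_scope.
Local Open Scope ring_scope.

Definition qform {R : realType} {n : nat} (A : 'M[R]_n) (x : 'cV[R]_n) : R :=
  (x^T *m A *m x) 0 0.

Definition dotv {R : realType} {n : nat} (u v : 'cV[R]_n) : R := (u^T *m v) 0 0.

Definition posdef {R : realType} {n : nat} (A : 'M[R]_n) : Prop :=
  A^T = A /\ (forall x : 'cV[R]_n, x != 0 -> 0 < qform A x).

Definition norm2 {R : realType} {n : nat} (v : 'cV[R]_n) : R :=
  Num.sqrt (\sum_(i < n) v i 0 ^+ 2).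

Definition Phi {R : realType} (x : R) : R :=
  fine (normal_prob 0 1 `]-oo, x]).

Definition gauss_law {R : realType} (m s2 : R) : set R -> \bar R :=
  if s2 == 0 then (fun A => (\1_A m)%:E) else normal_prob m (Num.sqrt s2).

Definition is_gaussian_vector {R : realType} {dT : measure_display}
    {T : measurableType dT} (P : probability T R) {n : nat}
    (Z : T -> 'cV[R]_n) (mu : 'cV[R]_n) (Sigma : 'M[R]_n) : Prop :=
  forall v : 'cV[R]_n,
    measurable_fun setT (fun w => dotv v (Z w)) /\
    forall A : set R, measurable A ->
      P ((fun w => dotv v (Z w)) @^-1` A) = gauss_law (dotv v mu) (qform Sigma v) A.

Definition feasible_set {R : realType} {dT : measure_display}
    {T : measurableType dT} (P : probability T R) {n : nat}
    (Z : T -> 'cV[R]_n) (alpha delta : R) : set 'cV[R]_n :=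
  [set e | (P [set w | (alpha <= dotv (Z w) e)%R] >= (1 - delta)%:E)%E].

(* Main.v *)
Require Import Defs.
From HB Require Import structures.
From mathcomp Require Import all_boot all_order all_algebra.
From mathcomp Require Import all_classical all_reals all_analysis.
From mathcomp Require Import ring lra measurable_realfun.
Import Order.TTheory GRing.Theory Num.Theory.
Import numFieldNormedType.Exports.
Set Implicit Arguments.
Unset Strict Implicit.
Local Open Scope classical_set_scope.
Local Open Scope ring_scope.

Section S.
Variable R : realType.
Notation N := (@normal_prob R 0 1).
Lemma pdf_affine (m s x : R) : 0 < s ->
  normal_pdf m s (s * x + m) * s = normal_pdf 0 1 x.
Proof.
move=> s0.
rewrite /normal_pdf gt_eqF // oner_eq0 /normal_peak /normal_fun.
have -> : Num.sqrt (s ^+ 2 * pi *+ 2) = s * Num.sqrt (1 ^+ 2 * pi *+ 2).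
  by rewrite expr1n mul1r -mulrnAr sqrtrM ?sqr_ge0 // sqrtr_sqr gtr0_norm.
have -> : (- (s*x+m-m)^+2 / (s^+2*+2)) = - (x-0)^+2/(1^+2*+2).
  by rewrite addrK subr0; field; rewrite gt_eqF.
set E := expR _. set q := Num.sqrt _.
have q0 : q != 0 by rewrite gt_eqF // sqrtr_gt0 expr1n !mul1r pmulrn_lgt0 // pi_gt0.
rewrite invfM; field; rewrite q0 gt_eqF //.
Qed.
Lemma dF (s m : R) : (fun x : R => s * x + m)^`()%classic = cst s.
Proof.
apply/funext => x; rewrite derive1E deriveD// deriveM// derive_cst derive_id.
rewrite derive_cst scaler0 !addr0 /cst. exact: mulr1.
Qed.
Lemma normal_tail_affine (m s a : R) : 0 < s ->
  normal_prob m s `[a, +oo[ = normal_prob 0 1 `[(a - m) / s, +oo[.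
Proof.
move=> s0; rewrite /normal_prob.
pose F := fun x : R => s * x + m.
have Fb : F ((a-m)/s) = a by rewrite /F; field; rewrite gt_eqF.
rewrite -[in LHS]Fb (@increasing_ge0_integration_by_substitutiony _ F).
- apply: eq_integral => x _ /=; rewrite dF /= !fctE; congr EFin; exact: pdf_affine.
- by move=> x y _ _ xy; rewrite /F ltrD2r ltr_pM2l.
- by rewrite dF => x _; exact: cvg_cst.
- by rewrite dF; exact: is_cvg_cst.
- by rewrite dF; exact: is_cvg_cst.
- split.
  + move=> x _; apply: derivableD => //; apply: derivableM => //.
  + apply: cvg_at_right_filter; rewrite /F.
    apply: continuousD; [apply: continuousM => //; exact: cvg_cst| exact: cvg_cst].
- have -> : F = (fun x => (x + m / s) * s).
    by apply/funext => x; rewrite /F; field; rewrite gt_eqF.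
  apply: gt0_cvgMly => //; exact: cvg_addrr.
- apply: continuous_subspaceT; apply: continuous_normal_pdf; exact: lt0r_neq0.
- by move=> x _; exact: normal_pdf_ge0.
Qed.
Lemma PhiE (x : R) : (Phi x)%:E = N `]-oo, x].
Proof. by rewrite /Phi fineK // fin_num_measure. Qed.

Lemma Phi_split (x y : R) : x <= y -> (Phi y)%:E = ((Phi x)%:E + N `]x, y])%E.
Proof.
move=> xy; rewrite !PhiE.
rewrite (@itv_bndbnd_setU _ _ -oo%O (BRight x) (BRight y)) //; last first.
rewrite measureU //.
apply/seteqP; split => z //= []; rewrite !in_itv /= => h1 /andP[h2 h3]; lra.
Qed.
Lemma leb_oc (x y : R) : x <= y -> lebesgue_measure `]x, y] = (y - x)%:E.
Proof.
move=> xy; rewrite lebesgue_measure_itv /=.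
case: ifPn; rewrite lte_fin => h; first by rewrite EFinB.
have -> : y = x by apply/eqP; rewrite eq_le xy leNgt h.
by rewrite subrr.
Qed.

Lemma N_oc_le (x y : R) : x <= y -> (N `]x, y] <= (y - x)%:E)%E.
Proof.
move=> xy; rewrite /normal_prob.
apply: (@le_trans _ _ (\int[lebesgue_measure]_(z in `]x, y]) (cst 1%:E z))%E).
  apply: ge0_le_integral => //.
  - by move=> z _; rewrite lee_fin normal_pdf_ge0.
  - apply/measurable_realfun.measurable_EFinP; apply: measurable_funTS; exact: measurable_normal_pdf.
  - move=> z _; rewrite lee_fin /=.
    apply: (le_trans (normal_pdf_ub _ _ (oner_neq0 R))).
    rewrite /normal_peak expr1n mul1r invf_le1; last by rewrite sqrtr_gt0 pmulrn_lgt0 // pi_gt0.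
    rewrite -sqrtr1 ler_sqrt ?mulr2n; have := pi_ge2 R; try lra.
rewrite integral_cst //= mul1e leb_oc //.
Qed.

Lemma mpdfT : measurable_fun setT (fun x : R => (normal_pdf 0 1 x)%:E).
Proof. apply/measurable_realfun.measurable_EFinP; exact: measurable_normal_pdf. Qed.

Lemma sq_between (x y z : R) : x < z -> z <= y -> z ^+ 2 <= x ^+ 2 + y ^+ 2.
Proof.
move=> h1 h2; have [h|h] := leP 0 z.
- have : 0 <= (y - z) * (y + z) by apply: mulr_ge0; lra.
  have := sqr_ge0 x; rewrite !expr2; nra.
- have : 0 <= (z - x) * (- x - z) by apply: mulr_ge0; lra.
  have := sqr_ge0 y; rewrite !expr2; nra.
Qed.

Lemma N_oc_gt0 (x y : R) : x < y -> (0 < N `]x, y])%E.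
Proof.
move=> xy; rewrite /normal_prob.
set c := normal_peak (1:R) * expR (- (x ^+ 2 + y ^+ 2) / (1 ^+ 2 *+ 2)).
have c0 : 0 < c by rewrite mulr_gt0 ?expR_gt0 // normal_peak_gt0 // oner_neq0.
apply: (@lt_le_trans _ _ (\int[lebesgue_measure]_(z in `]x, y]) (cst c%:E z))%E).
  rewrite integral_cst //= leb_oc ?ltW // -EFinM lte_fin mulr_gt0 // subr_gt0 //.
apply: ge0_le_integral => //.
- by move=> z _; rewrite lee_fin ltW.
- exact: measurable_funTS mpdfT.
- move=> z; rewrite /= in_itv /= => /andP[h1 h2]; rewrite lee_fin /normal_pdf oner_eq0 /c.
  rewrite ler_pM2l ?normal_peak_gt0 ?oner_neq0 // /normal_fun ler_expR !mulNr lerN2.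
  rewrite ler_pM2r ?invr_gt0 ?pmulrn_lgt0 ?expr1n // subr0; exact: sq_between.
Qed.
Lemma Phi_split_r (x y : R) : x <= y -> Phi y = Phi x + fine (N `]x, y]).
Proof.
move=> xy; have fin : N `]x, y] \is a fin_num by rewrite fin_num_measure.
apply: EFin_inj; rewrite EFinD (fineK fin); exact: Phi_split.
Qed.

Lemma Phi_lt (x y : R) : x < y -> Phi x < Phi y.
Proof.
move=> xy; rewrite (Phi_split_r (ltW xy)) ltrDl.
have fin : N `]x, y] \is a fin_num by rewrite fin_num_measure.
by rewrite -lte_fin fineK // N_oc_gt0.
Qed.

Lemma Phi_lip (x y : R) : x <= y -> Phi y - Phi x <= y - x.
Proof.
move=> xy; rewrite (Phi_split_r xy) [Phi x + _]addrC addrK.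
have fin : N `]x, y] \is a fin_num by rewrite fin_num_measure.
by rewrite -lee_fin fineK // N_oc_le.
Qed.

Lemma N_point (b : R) : N [set b] = 0%E.
Proof.
move: (normal_prob_dominates (0:R) 1) => /null_content_dominatesP; apply => //; exact: lebesgue_measure_set1.
Qed.

Lemma N_tail (b : R) : N `[b, +oo[ = (1 - Phi b)%:E.
Proof.
have -> : `[b, +oo[%classic = [set b] `|` ~` `]-oo, b].
  apply/seteqP; split => z /=; rewrite !in_itv /= ?andbT.
  - move=> h; have [<-|ne] := eqVneq b z; [by left| right].
    move=> zb; move: ne; rewrite eq_le h zb //.
  - case=> [->|/negP]; first by rewrite lexx.
    by rewrite -ltNge => /ltW.
rewrite measureU //; last first.
  by apply/seteqP; split => z //= [->]; rewrite in_itv /= lexx.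
  by apply: measurableC.
change ((N [set b] + N (~` `]-oo, b]))%E = (1 - Phi b)%:E).
rewrite N_point add0e probability_setC //.
change ((1 - N `]-oo, b])%E = (1 - Phi b)%:E).
by rewrite -PhiE EFinB.
Qed.
End S.

Section LA.
Variables (R : realType) (n : nat).
Implicit Types (u v w e : 'cV[R]_n) (A : 'M[R]_n).

Lemma dotvE u v : dotv u v = \sum_i u i 0 * v i 0.
Proof. by rewrite /dotv mxE; apply: eq_bigr => i _; rewrite mxE. Qed.

Lemma dotvC u v : dotv u v = dotv v u.
Proof. by rewrite !dotvE; apply: eq_bigr => i _; rewrite mulrC. Qed.

Lemma dotv_ge0 u : 0 <= dotv u u.
Proof. by rewrite dotvE; apply: sumr_ge0 => i _; rewrite -expr2 sqr_ge0. Qed.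

Lemma norm2E u : norm2 u = Num.sqrt (dotv u u).
Proof. by rewrite /norm2 dotvE; congr Num.sqrt; apply: eq_bigr => i _; rewrite expr2. Qed.

Lemma qformE A u : qform A u = dotv u (A *m u).
Proof. by rewrite /qform /dotv mulmxA. Qed.

Lemma dotvZl t u v : dotv (t *: u) v = t * dotv u v.
Proof. by rewrite !dotvE mulr_sumr; apply: eq_bigr => i _; rewrite mxE mulrA. Qed.

Lemma dotv0r u : dotv u 0 = 0.
Proof. by rewrite dotvE big1 // => i _; rewrite mxE mulr0. Qed.

Lemma dotvM u A v : dotv u (A *m v) = dotv (A^T *m u) v.
Proof. by rewrite /dotv trmx_mul trmxK mulmxA. Qed.

Lemma CS u w : dotv u w <= Num.sqrt (dotv u u) * Num.sqrt (dotv w w).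
Proof.
set a := dotv u u; set b := dotv w w; set c := dotv u w.
have key t : 0 <= t ^+ 2 * a - (2 * t) * c + b.
  have -> : t ^+ 2 * a - (2 * t) * c + b = \sum_i (t * u i 0 - w i 0) ^+ 2.
    rewrite /a /b /c !dotvE !mulr_sumr -sumrB -big_split /=.
    by apply: eq_bigr => i _; ring.
  by apply: sumr_ge0 => i _; rewrite sqr_ge0.
have a0 : 0 <= a by exact: dotv_ge0.
have b0 : 0 <= b by exact: dotv_ge0.
have [az|ap] := eqVneq a 0.
  rewrite az sqrtr0 mul0r.
  rewrite leNgt; apply/negP => cp.
  have := key ((b + 1) / (2 * c)); rewrite az mulr0 sub0r.
  have -> : 2 * ((b + 1) / (2 * c)) * c = b + 1 by field; rewrite gt_eqF.
  lra.
have apos : 0 < a by rewrite lt_def ap a0.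
have := key (c / a).
have -> : (c / a) ^+ 2 * a - 2 * (c / a) * c + b = b - c ^+ 2 / a.
  by field; rewrite ap.
rewrite subr_ge0 ler_pdivrMr // => h.
rewrite -sqrtrM //.
apply: (le_trans (ler_norm c)).
rewrite -sqrtr_sqr ler_sqrt; last by rewrite mulr_ge0.
by rewrite mulrC.
Qed.
End LA.

Section Extra.
Variables (R : realType) (n : nat).

Lemma Phi_le (x y : R) : x <= y -> Phi x <= Phi y.
Proof.
move=> xy; have [<-|ne] := eqVneq x y; first by [].
by apply/ltW/Phi_lt; rewrite lt_neqAle ne xy.
Qed.

Lemma posdef_unit (A : 'M[R]_n) : posdef A -> A \in unitmx.
Proof.
case=> _ pd; rewrite unitmxE unitfE; apply/negP => /det0P [v v0 vA].
have := pd v^T; rewrite trmx_eq0 v0 => /(_ isT).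
by rewrite /qform trmxK vA mul0mx mxE ltxx.
Qed.

Lemma u_id (S Sig : 'M[R]_n) (e y : 'cV[R]_n) : S^T = S ->
  S *m S = invmx Sig -> Sig \in unitmx ->
  dotv (S *m (Sig *m e)) (S *m y) = dotv e y.
Proof.
move=> ST SS Su; rewrite dotvM ST mulmxA SS mulKmx //.
Qed.

Lemma gauss_tail (m q a : R) : 0 < q ->
  gauss_law m q `[a, +oo[ = (1 - Phi ((a - m) / Num.sqrt q))%:E.
Proof.
move=> q0; rewrite /gauss_law gt_eqF // normal_tail_affine ?sqrtr_gt0 //.
exact: N_tail.
Qed.
End Extra.

Theorem lemma5 (R : realType) (n : nat) (dT : measure_display)
    (T : measurableType dT) (P : probability T R)
    (mu : 'cV[R]_n) (Sigma : 'M[R]_n) (alpha delta : R)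
    (Z : T -> 'cV[R]_n) (S : 'M[R]_n) :
  (0 < n)%N ->
  posdef Sigma ->
  0 < alpha ->
  0 < delta < 1 ->
  is_gaussian_vector P Z mu Sigma ->
  (* S = Sigma^{-1/2}: the symmetric positive definite square root of Sigma^{-1} *)
  posdef S -> S *m S = invmx Sigma ->
  (feasible_set P Z alpha delta !=set0 <-> Phi (- norm2 (S *m mu)) < delta).
Proof.
move=> n0 [SigT Sigpd] a0 /andP[d0 d1] HZ [ST Spd] SS.
have Su : Sigma \in unitmx by apply: posdef_unit.
set K := norm2 (S *m mu).
have K0 : 0 <= K by rewrite /K /norm2 sqrtr_ge0.
have CSe e : dotv e mu <= Num.sqrt (qform Sigma e) * K.
  rewrite -(u_id e mu ST SS Su) /K norm2E.
  have <- : dotv (S *m (Sigma *m e)) (S *m (Sigma *m e)) = qform Sigma e.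
    by rewrite u_id // qformE.
  exact: CS.
have prob e : e != 0 -> P [set w | alpha <= dotv (Z w) e] =
    (1 - Phi ((alpha - dotv e mu) / Num.sqrt (qform Sigma e)))%:E.
  move=> e0; have q0 := Sigpd e e0.
  have -> : [set w | alpha <= dotv (Z w) e] = (fun w => dotv e (Z w)) @^-1` `[alpha, +oo[.
    by apply/seteqP; split => w /=; rewrite in_itv /= andbT dotvC.
  by rewrite (proj2 (HZ e)) // gauss_tail.
split.
- case=> e /= He.
  have e0 : e != 0.
    apply/negP => /eqP ez; move: He; rewrite ez /feasible_set /=.
    rewrite (_ : [set w | alpha <= dotv (Z w) 0] = set0) ?measure0 ?lee_fin; first lra.
    by apply/seteqP; split => w //=; rewrite dotv0r; lra.
  move: He; rewrite /feasible_set /= prob // lee_fin => h.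
  have q0 := Sigpd e e0.
  have s0 : 0 < Num.sqrt (qform Sigma e) by rewrite sqrtr_gt0.
  have hb : - K < (alpha - dotv e mu) / Num.sqrt (qform Sigma e).
    rewrite ltr_pdivlMr //; have := CSe e; nra.
  have := Phi_lt hb; lra.
- move=> hK.
  set c := - K + (delta - Phi (- K)).
  have hc : Phi c <= delta.
    have := @Phi_lip R (- K) c; rewrite /c; lra.
  have [e0 [e0nz he0]] : exists e0, e0 != 0 /\ K * Num.sqrt (qform Sigma e0) <= dotv e0 mu.
    case: (eqVneq mu 0) => [mu0|munz].
    + exists (const_mx 1); split.
        apply/negP => /eqP /matrixP /(_ (Ordinal n0) 0); rewrite !mxE => /eqP.
        by rewrite oner_eq0.
      by rewrite /K mu0 mulmx0 norm2E !dotv0r sqrtr0 mul0r.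
    + exists (S *m (S *m mu)); split.
        apply/negP => /eqP h0; move/negP: munz; apply.
        have h1 : invmx Sigma *m mu = 0 by rewrite -SS -mulmxA h0.
        by rewrite -(mulKVmx Su mu) h1 mulmx0.
      have hu : Sigma *m (S *m (S *m mu)) = mu by rewrite [S *m (S *m mu)]mulmxA SS mulKVmx.
      have hq : qform Sigma (S *m (S *m mu)) = dotv (S *m mu) (S *m mu).
        by rewrite qformE -(u_id (S *m (S *m mu)) (Sigma *m (S *m (S *m mu))) ST SS Su) hu.
      have hm : dotv (S *m (S *m mu)) mu = dotv (S *m mu) (S *m mu).
        by rewrite -(u_id _ mu ST SS Su) hu.
      rewrite hq hm /K norm2E -expr2 sqr_sqrtr //; exact: dotv_ge0.
  have q0 := Sigpd e0 e0nz.
  set s0 := Num.sqrt (qform Sigma e0).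
  have s0p : 0 < s0 by rewrite sqrtr_gt0.
  set m0 := dotv e0 mu.
  have cK : 0 < c + K by rewrite /c; lra.
  set t := alpha / (s0 * (c + K)).
  have tp : 0 < t by rewrite divr_gt0 // mulr_gt0.
  exists (t *: e0).
  have te0 : t *: e0 != 0 by rewrite scalemx_eq0 negb_or gt_eqF.
  rewrite /feasible_set /= prob // lee_fin.
  have hq : qform Sigma (t *: e0) = t ^+ 2 * qform Sigma e0.
    by rewrite !qformE -scalemxAr dotvZl dotvC dotvZl dotvC mulrA expr2.
  have hs : Num.sqrt (qform Sigma (t *: e0)) = t * s0.
    by rewrite hq sqrtrM ?sqr_ge0 // sqrtr_sqr gtr0_norm.
  rewrite hs dotvZl -/m0.
  have hb : (alpha - t * m0) / (t * s0) <= c.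
    rewrite ler_pdivrMr; last exact: mulr_gt0.
    have ht : t * (s0 * (c + K)) = alpha by rewrite /t divfK // gt_eqF // mulr_gt0.
    have h2 : 0 <= t * (m0 - K * s0) by apply: mulr_ge0; [exact: ltW | rewrite subr_ge0].
    nra.
  have := Phi_le hb; lra.
Qed.
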